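(* Let $X,Y,\tilde X$ be spaces with $X$ and $\tilde X$ compact Hausdorff, and let $k\colon\tilde X\to X$ be a surjective map. Then the homomorphism $\langle Y^k\rangle\colon\langle Y^X\rangle\to\langle Y^{\tilde X}\rangle$ satisfies $\langle Y^X\rangle^{(s)}=\langle Y^k\rangle^{-1}\big(\langle Y^{\tilde X}\rangle^{(s)}\big)$ for every $s\ge0$.
   Context: Spaces and maps are based. For a set $W$, $\langle W\rangle$ is the free abelian group with basis $\{\langle w\rangle\}$, and a function $f$ induces $\langle f\rangle$. $Y^X$ is the set of based maps $X\to Y$; $Y^k\colon Y^X\to Y^{\tilde X}$, $d\mapsto d\circ k$. For $R\subseteq X$ containing the basepoint, $V\mapsto V|_R$ is the homomorphism $\langle Y^X\rangle\to\langle Y^R\rangle$ induced by restriction. $\mathcal F_n(X)$ is the set of finite subsets $R\subseteq X$ containing the basepoint with $|R|\le n+1$, and $\langle Y^X\rangle^{(s)}=\{V\in\langle Y^X\rangle: V|_R=0\text{ for all }R\in\mathcal F_{s-1}(X)\}$ (similarly for $\tilde X$). *)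

(* Defs.v *)
From HB Require Import structures.
From mathcomp Require Import all_boot all_order all_algebra.
From mathcomp Require Import finmap.
From mathcomp Require Import boolp classical_sets functions topology.
From mathcomp Require freeg.
Import freeg.

Set Implicit Arguments.
Unset Strict Implicit.
Unset Printing Implicit Defensive.

Import GRing.Theory.
Local Open Scope ring_scope.
Local Open Scope fset_scope.

Record bmap (X Y : topologicalType) (x0 : X) (y0 : Y) := BMap {
  bfun :> X -> Y;
  bfun_cont : continuous bfun;
  bfun_based : bfun x0 = y0 }.

HB.instance Definition _ (X Y : topologicalType) (x0 : X) (y0 : Y) :=
  gen_eqMixin (bmap x0 y0).
HB.instance Definition _ (X Y : topologicalType) (x0 : X) (y0 : Y) :=
  gen_choiceMixin (bmap x0 y0).

(* Y^R for a finite subset R of X containing the basepoint: based maps  *)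
(* R -> Y.  R is finite (and X Hausdorff) so R is discrete and every    *)
(* map R -> Y is continuous.                                           *)
Record rmap (X Y : topologicalType) (x0 : X) (y0 : Y) (R : {fset X}) := RMap {
  rfun :> R -> Y;
  rfun_based : forall h : x0 \in R, rfun [` h] = y0 }.

HB.instance Definition _ (X Y : topologicalType) (x0 : X) (y0 : Y) R :=
  gen_eqMixin (@rmap X Y x0 y0 R).
HB.instance Definition _ (X Y : topologicalType) (x0 : X) (y0 : Y) R :=
  gen_choiceMixin (@rmap X Y x0 y0 R).


Definition restr_map (X Y : topologicalType) (x0 : X) (y0 : Y) (R : {fset X})
  (d : bmap x0 y0) : @rmap X Y x0 y0 R :=
  @RMap X Y x0 y0 R (fun x => d (fsval x)) (fun _ => bfun_based d).

Definition restr (X Y : topologicalType) (x0 : X) (y0 : Y) (R : {fset X})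
  (V : {freeg (bmap x0 y0) / int}) : {freeg (@rmap X Y x0 y0 R) / int} :=
  fglift (fun d => << restr_map R d >> : {freeg (@rmap X Y x0 y0 R) / int}) V.

(* <Y^X>^(s) : V with V|_R = 0 for all R in F_{s-1}(X), i.e. all finite *)
(* R containing the basepoint with |R| <= s.                            *)
Definition filt (X Y : topologicalType) (x0 : X) (y0 : Y) (s : nat) :
  set {freeg (bmap x0 y0) / int} :=
  [set V | forall R : {fset X}, x0 \in R -> (#|` R| <= s)%N -> restr R V = 0].

Definition comp_map (Xt X Y : topologicalType) (xt0 : Xt) (x0 : X) (y0 : Y)
  (k : Xt -> X) (hk : continuous k) (hk0 : k xt0 = x0) (d : bmap x0 y0) :
  bmap xt0 y0.
Proof.
refine (@BMap Xt Y xt0 y0 (d \o k) _ _).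
- by move=> x; apply: continuous_comp; [exact: hk | exact: bfun_cont].
- by rewrite /= hk0 bfun_based.
Defined.

Definition compk (Xt X Y : topologicalType) (xt0 : Xt) (x0 : X) (y0 : Y)
  (k : Xt -> X) (hk : continuous k) (hk0 : k xt0 = x0)
  (V : {freeg (bmap x0 y0) / int}) : {freeg (bmap xt0 y0) / int} :=
  fglift (fun d => << @comp_map Xt X Y xt0 x0 y0 k hk hk0 d >> : {freeg (bmap xt0 y0) / int}) V.

(* Main.v *)
Require Import Defs.
From HB Require Import structures.
From mathcomp Require Import all_boot all_order all_algebra.
From mathcomp Require Import finmap.
From mathcomp Require Import boolp classical_sets functions topology.
From mathcomp Require freeg.
Import freeg.
Set Implicit Arguments.
Unset Strict Implicit.
Import GRing.Theory.
Local Open Scope ring_scope.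
Local Open Scope fset_scope.

HB.instance Definition _ (K : choiceType) (M : lmodType int) (f : K -> M) :=
  GRing.isAdditive.Build {freeg K / int} M (fglift f) (lift_is_additive f).

Lemma fgliftE (K : choiceType) (M : lmodType int) (f : K -> M) D :
  fglift f D = \sum_(z <- dom D) coeff z D *: f z.
Proof.
rewrite -{1}(freeg_sumE D) raddf_sum; apply: eq_bigr => z _.
exact: liftU. Qed.

Lemma fglift_comp (A B : choiceType) (M : lmodType int) (g : A -> B) (f : B -> M) D :
  fglift f (fglift (fun a => << g a >> : {freeg B / int}) D) = fglift (f \o g) D.
Proof.
rewrite [fglift _ D]fgliftE raddf_sum fgliftE; apply: eq_bigr => z _.
rewrite -[coeff z D in LHS]intz -[coeff z D in RHS]intz !scaler_int raddfMz.
congr (_ *~ _); rewrite /= liftU scale1r //.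
Qed.

Lemma fglift_inj (A B : choiceType) (g : A -> B) (ginj : injective g) D :
  fglift (fun a => << g a >> : {freeg B / int}) D = 0 -> D = 0.
Proof.
move=> H; apply/eqP/freeg_eqP => a; rewrite coeff0.
have := congr1 (coeff (g a)) H; rewrite coeff0 => <-.
rewrite /coeff fglift_comp.
suff -> : ((fun y : B => (y == g a)%:R : int^o) \o g) = (fun y : A => (y == a)%:R : int^o) by [].
by apply: funext => z /=; rewrite (inj_eq ginj).
Qed.

Lemma rmap_eq (X Y : topologicalType) (x0 : X) (y0 : Y) (R : {fset X})
  (r1 r2 : @rmap X Y x0 y0 R) : rfun r1 = rfun r2 -> r1 = r2.
Proof.
case: r1 r2 => f1 p1 [f2 p2] /= E; subst f2; congr RMap.
exact: Prop_irrelevance.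
Qed.

Definition precomp (Xt X Y : topologicalType) (xt0 : Xt) (x0 : X) (y0 : Y)
  (k : Xt -> X) (hk0 : k xt0 = x0) (R : {fset X}) (Rt : {fset Xt})
  (h : forall x : Rt, k (val x) \in R) (r : @rmap X Y x0 y0 R) : @rmap Xt Y xt0 y0 Rt.
Proof.
refine (@RMap Xt Y xt0 y0 Rt (fun x => r [` h x]) _).
move=> hx; move: (h [`hx]) => /=.
rewrite hk0 => p; exact: rfun_based.
Defined.

Lemma restr_compk (Xt X Y : topologicalType) (xt0 : Xt) (x0 : X) (y0 : Y)
  (k : Xt -> X) (hk : continuous k) (hk0 : k xt0 = x0) (R : {fset X}) (Rt : {fset Xt})
  (h : forall x : Rt, k (val x) \in R) V :
  restr Rt (@compk Xt X Y xt0 x0 y0 k hk hk0 V) =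
  fglift (fun r => << precomp hk0 h r >> : {freeg _ / int}) (restr R V).
Proof.
rewrite /restr /compk !fglift_comp; congr (fglift _ V).
apply: funext => d /=; congr (<< _ >>); exact: rmap_eq.
Qed.

Local Open Scope classical_set_scope.

Theorem lemma3p2 (X Y Xt : topologicalType) (x0 : X) (y0 : Y) (xt0 : Xt)
  (hX : hausdorff_space X) (cX : compact [set: X])
  (hXt : hausdorff_space Xt) (cXt : compact [set: Xt])
  (k : Xt -> X) (hk : continuous k) (hk0 : k xt0 = x0)
  (ksurj : forall x : X, exists xt : Xt, k xt = x)
  (s : nat) :
  @filt X Y x0 y0 s = (@compk Xt X Y xt0 x0 y0 k hk hk0) @^-1` (@filt Xt Y xt0 y0 s).
Proof.
rewrite eqEsubset; split => V /=.
- move=> HV Rt hxt0 hcard.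
  pose R := [fset k x | x in Rt].
  have h : forall x : Rt, k (val x) \in R.
    by move=> x; apply/imfsetP; exists (val x) => //; exact: fsvalP.
  rewrite (restr_compk hk hk0 h) (HV R); first exact: raddf0.
    by rewrite -hk0; apply/imfsetP; exists xt0.
  apply: leq_trans hcard; exact: leq_imfset_card.
- move=> HV R hx0 hcard.
  have [f hf] := choice ksurj.
  pose sec x := if x == x0 then xt0 else f x.
  have ksec : forall x, k (sec x) = x.
    by move=> x; rewrite /sec; case: eqP => [->|_]; [exact: hk0 | exact: hf].
  pose Rt := [fset sec x | x in R].
  have h : forall x : Rt, k (val x) \in R.
    move=> x; change (k (fsval x) \in R); have /imfsetP [y yR ->] := fsvalP x; by rewrite ksec.
  have H1 : xt0 \in Rt by apply/imfsetP; exists x0 => //; rewrite /sec eqxx.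
  have H2 : (#|` Rt| <= s)%N by apply: leq_trans hcard; exact: leq_imfset_card.
  have := HV Rt H1 H2; rewrite (restr_compk hk hk0 h); apply: fglift_inj.
  move=> r1 r2 E; apply: rmap_eq; apply: funext => y.
  have hy : sec (val y) \in Rt by apply/imfsetP; exists (val y) => //; exact: fsvalP.
  have := congr1 (fun r => rfun r [` hy]) E => /=.
  have e : [` h [` hy]] = y by apply: val_inj; rewrite /= ksec.
  by rewrite e.
Qed.
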